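(* Let $P$ be a finite poset, $R$ a commutative unital ring, and $D$ a derivation of $I^3(P,R)$. Then for all $x<y$ in $P$, $D(e_{xxy})=D(e_{xyy})=0$.
   Context: For a finite poset $P$, $P^3_\le=\{(x,y,z)\in P^3: x\le y\le z\}$, and $I^3(P,R)$ is the $R$-module of functions $f:P^3_\le\to R$ with multiplication $(fg)(x_1,x_2,x_3)=\sum f(x_1,y_1,y_2)g(y_1,y_2,x_3)$ over all $x_1\le y_1\le x_2\le y_2\le x_3$. For $x\le y\le z$, $e_{xyz}$ is the function equal to $1$ at $(x,y,z)$ and $0$ elsewhere. A derivation is an $R$-linear map $D:I^3(P,R)\to I^3(P,R)$ with $D(fg)=D(f)g+fD(g)$. *)

(* Defs.v *)
From HB Require Import structures.
From mathcomp Require Import all_boot all_order all_algebra.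
Set Implicit Arguments. Unset Strict Implicit. Unset Printing Implicit Defensive.
Import Order.TTheory GRing.Theory.
Local Open Scope ring_scope.

Section I3.
Variables (d : Order.disp_t) (P : finPOrderType d) (R : comPzRingType).

(* Ambient R-module of all functions P^3 -> R; I^3(P,R) is the submodule of
   functions supported on P^3_<= = {(x,y,z) | x <= y <= z}. *)
Local Notation fun3 := {ffun P * P * P -> R}.

Definition le3 (x y z : P) : bool := (x <= y)%O && (y <= z)%O.

Definition inI3 (f : fun3) : Prop :=
  forall x y z : P, ~~ le3 x y z -> f (x, y, z) = 0.

Definition mul3 (f g : fun3) : fun3 :=
  [ffun t => let: (x1, x2, x3) := t in
     if le3 x1 x2 x3 then
       \sum_(y1 : P) \sum_(y2 : P)
         (if [&& (x1 <= y1)%O, (y1 <= x2)%O, (x2 <= y2)%O & (y2 <= x3)%O]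
          then f (x1, y1, y2) * g (y1, y2, x3) else 0)
     else 0].

Definition scale3 (a : R) (f : fun3) : fun3 := [ffun t => a * f t].

Definition e3 (x y z : P) : fun3 :=
  [ffun t => if t == (x, y, z) then 1 else 0].

(* D is a derivation of I^3(P,R): an R-linear self-map of I^3(P,R)
   satisfying the Leibniz rule (D's values outside I^3 are irrelevant). *)
Definition derivation3 (D : fun3 -> fun3) : Prop :=
  [/\ forall f, inI3 f -> inI3 (D f),
      forall (a : R) f g, inI3 f -> inI3 g -> D (scale3 a f + g) = scale3 a (D f) + D g
    & forall f g, inI3 f -> inI3 g -> D (mul3 f g) = mul3 (D f) g + mul3 f (D g)].

End I3.

Notation fun3 P R := {ffun P * P * P -> R}.

(* Main.v *)
Require Import Defs.
From mathcomp Require Import all_boot all_order all_algebra.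
Set Implicit Arguments. Unset Strict Implicit. Unset Printing Implicit Defensive.
Import Order.TTheory GRing.Theory.
Local Open Scope ring_scope.

Section Pf.
Variables (d : Order.disp_t) (P : finPOrderType d) (R : comPzRingType).
Local Notation F3 := (fun3 P R).
Local Notation e := (e3 R).
Local Notation I3 := (@inI3 d P R).

Lemma addE (f g : F3) t : (f + g) t = f t + g t.
Proof. by rewrite ffunE. Qed.

Lemma sum2_pt (G : P -> P -> R) a b :
  (forall y1 y2, (y1, y2) != (a, b) -> G y1 y2 = 0) ->
  \sum_(y1 : P) \sum_(y2 : P) G y1 y2 = G a b.
Proof.
move=> H; rewrite (bigD1 a) //= (bigD1 b) //= !big1 ?addr0 //.
  move=> y1 ne; apply: big1 => y2 _; apply: H.
  by rewrite xpair_eqE (negbTE ne).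
move=> y2 ne; apply: H; by rewrite xpair_eqE eqxx (negbTE ne).
Qed.

Lemma mulE_r (f : F3) a b c p1 p2 p3 :
  mul3 f (e a b c) (p1,p2,p3) =
  if [&& le3 p1 p2 p3, p3 == c, (p1 <= a)%O, (a <= p2)%O, (p2 <= b)%O & (b <= p3)%O]
  then f (p1,a,b) else 0.
Proof.
rewrite /mul3 ffunE /=; case: (le3 p1 p2 p3) => //=.
rewrite (@sum2_pt _ a b).
  rewrite ffunE !xpair_eqE !eqxx /=.
  by case: (p3 == c); case: ifP; rewrite ?mulr1 ?mulr0.
move=> y1 y2 ne; rewrite ffunE !xpair_eqE.
by move: ne; rewrite xpair_eqE => /negbTE ->; rewrite /= mulr0; case: ifP.
Qed.

Lemma mulE_l (g : F3) a b c p1 p2 p3 :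
  mul3 (e a b c) g (p1,p2,p3) =
  if [&& le3 p1 p2 p3, p1 == a, (p1 <= b)%O, (b <= p2)%O, (p2 <= c)%O & (c <= p3)%O]
  then g (b,c,p3) else 0.
Proof.
rewrite /mul3 ffunE /=; case: (le3 p1 p2 p3) => //=.
rewrite (@sum2_pt _ b c).
  rewrite ffunE !xpair_eqE !eqxx /=.
  by case: (p1 == a); case: ifP; rewrite ?mul1r ?mul0r ?andbF.
move=> y1 y2 ne; rewrite ffunE !xpair_eqE.
by move: ne; rewrite xpair_eqE -!andbA => /negbTE ->; rewrite andbF /= mul0r; case: ifP.
Qed.

Ltac destr := repeat match goal with H : is_true (_ && _) |- _ => case/andP: H => ? ? end.

Lemma ifc (b : bool) (v : R) : (b -> False) -> (if b then v else 0) = 0.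
Proof. by case: b => // H; exfalso; apply: H. Qed.

Lemma anti2 (a b : P) : (a <= b)%O -> (b <= a)%O -> a = b.
Proof. by move=> h1 h2; apply: le_anti; rewrite h1 h2. Qed.

Lemma zeroE (t : P * P * P) : (0 : F3) t = 0.
Proof. by rewrite ffunE. Qed.

Lemma inI3_e (a b c : P) : le3 a b c -> I3 (e a b c).
Proof.
move=> H p1 p2 p3 Hn; rewrite ffunE; case: eqP => // -[e1 e2 e3].
by subst; rewrite H in Hn.
Qed.

Lemma inI3_mul (f g : F3) : I3 (mul3 f g).
Proof. by move=> p1 p2 p3 Hn; rewrite ffunE /= (negbTE Hn). Qed.

Lemma mul_e0 (a b c a' b' c' : P) : (b, c) != (a', b') ->
  mul3 (e a b c) (e a' b' c') = 0.
Proof.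
move=> ne; apply/ffunP => -[[p1 p2] p3]; rewrite mulE_l zeroE.
case: ifP => // _; rewrite ffunE !xpair_eqE.
by move: ne; rewrite xpair_eqE => /negbTE ->.
Qed.

Lemma idem (x : P) : mul3 (e x x x) (e x x x) = e x x x.
Proof.
apply/ffunP => -[[p1 p2] p3]; rewrite mulE_l.
case: (boolP ((p1, p2, p3) == (x, x, x))) => [/eqP [-> -> ->]|ne].
  by rewrite /le3 !lexx eqxx !ffunE eqxx.
rewrite [RHS]ffunE (negbTE ne).
case: ifP => //; case/andP => _ /and5P[/eqP e1 _ h1 h2 h3].
have e2 := anti2 h1 h2; subst; rewrite ffunE.
case: eqP => // -[e3]; subst; by rewrite eqxx in ne.
Qed.

Lemma S1 (x y : P) : (x <= y)%O ->
  mul3 (e x x x) (mul3 (e x x y) (e x y y)) = e x x y.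
Proof.
move=> hxy; apply/ffunP => -[[p1 p2] p3]; rewrite mulE_l mulE_r.
case: (boolP ((p1, p2, p3) == (x, x, y))) => [/eqP [-> -> ->]|ne].
  by rewrite /le3 !lexx hxy eqxx !ffunE eqxx.
rewrite [RHS]ffunE (negbTE ne).
case: ifP => //; case/andP => _ /and5P[/eqP e1 _ h1 h2 h3].
have e2 := anti2 h1 h2; subst.
case: ifP => //; case/andP => _ /and5P[/eqP e3 _ _ _ _]; subst.
by rewrite eqxx in ne.
Qed.

Lemma S2 (x y : P) : (x <= y)%O ->
  mul3 (mul3 (e x x y) (e x y y)) (e y y y) = e x y y.
Proof.
move=> hxy; apply/ffunP => -[[p1 p2] p3]; rewrite mulE_r mulE_l.
case: (boolP ((p1, p2, p3) == (x, y, y))) => [/eqP [-> -> ->]|ne].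
  by rewrite /le3 !lexx hxy eqxx !ffunE eqxx.
rewrite [RHS]ffunE (negbTE ne).
case: ifP => //; case/andP => _ /and5P[/eqP e1 _ h1 h2 h3].
have e2 := anti2 h1 h2; subst.
case: ifP => //; case/andP => _ /and5P[/eqP e3 _ _ _ _]; subst.
by rewrite eqxx in ne.
Qed.

Variable D : F3 -> F3.
Hypothesis HD : derivation3 D.

Lemma D_I3 f : I3 f -> I3 (D f).
Proof. by case: HD => H _ _; apply: H. Qed.

Lemma D_mul f g : I3 f -> I3 g -> D (mul3 f g) = mul3 (D f) g + mul3 f (D g).
Proof. by case: HD => _ _ H; apply: H. Qed.

Lemma D0 : D 0 = 0.
Proof.
case: HD => _ lin _.
have I0 : I3 0 by move=> ? ? ? _; rewrite zeroE.
have := lin 1 0 0 I0 I0.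
have -> : scale3 1 (0 : F3) + 0 = 0 by apply/ffunP => t; rewrite !ffunE mul1r addr0.
have -> : scale3 1 (D 0) = D 0 by apply/ffunP => t; rewrite ffunE mul1r.
by move=> H; apply: (@addrI _ (D 0)); rewrite addr0 -H.
Qed.

Lemma Dpt f g p : I3 f -> I3 g ->
  D (mul3 f g) p = mul3 (D f) g p + mul3 f (D g) p.
Proof. by move=> If Ig; rewrite D_mul // addE. Qed.

Lemma Dpt0 f g p : I3 f -> I3 g -> mul3 f g = 0 ->
  mul3 (D f) g p + mul3 f (D g) p = 0.
Proof. by move=> If Ig H; rewrite -Dpt // H D0 zeroE. Qed.


Lemma Ie (a b c : P) : (a <= b)%O -> (b <= c)%O -> I3 (e a b c).
Proof. by move=> h1 h2; apply: inI3_e; rewrite /le3 h1 h2. Qed.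

Lemma GA (x t : P) : D (e x x x) (x, x, t) = 0.
Proof.
have Ix := Ie (lexx x) (lexx x).
case: (boolP (x <= t)%O) => hxt; last first.
  by apply: (D_I3 Ix); rewrite /le3 lexx (negbTE hxt).
case: (t =P x) => [->|ne].
  have := Dpt (x, x, x) Ix Ix; rewrite idem mulE_r mulE_l /le3 !lexx eqxx /=.
  by move=> H; apply: (@addrI _ (D (e x x x) (x, x, x))); rewrite addr0 -H.
have Ig := Ie hxt (lexx t).
have Z : mul3 (e x x x) (e x t t) = 0.
  by apply: mul_e0; rewrite xpair_eqE eqxx /= eq_sym; apply/eqP.
have := Dpt0 (x, t, t) Ix Ig Z.
rewrite mulE_r mulE_l /le3 !lexx hxt !eqxx /= ifc ?addr0 //.
by move=> H; destr; apply: ne; apply: anti2.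
Qed.

Lemma GB (y t : P) : D (e y y y) (t, y, y) = 0.
Proof.
have Iy := Ie (lexx y) (lexx y).
case: (boolP (t <= y)%O) => hty; last first.
  by apply: (D_I3 Iy); rewrite /le3 lexx (negbTE hty).
case: (t =P y) => [->|ne].
  have := Dpt (y, y, y) Iy Iy; rewrite idem mulE_r mulE_l /le3 !lexx eqxx /=.
  by move=> H; apply: (@addrI _ (D (e y y y) (y, y, y))); rewrite addr0 -H.
have Ig := Ie (lexx t) hty.
have Z : mul3 (e t t y) (e y y y) = 0.
  by apply: mul_e0; rewrite xpair_eqE eqxx andbT; apply/eqP.
have := Dpt0 (t, t, y) Ig Iy Z.
rewrite mulE_r mulE_l /le3 !lexx hty !eqxx /= ifc ?add0r //.
by move=> H; destr; apply: ne; apply: anti2.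
Qed.


Lemma key (x y : P) : (x <= y)%O ->
  D (e x x y) (x, x, y) = 0 /\ D (e x y y) (x, y, y) = 0.
Proof.
move=> hxy.
have Ixxx := Ie (lexx x) (lexx x).
have Iyyy := Ie (lexx y) (lexx y).
have Ixxy := Ie (lexx x) hxy.
have Ixyy := Ie hxy (lexx y).
have IS := inI3_mul (e x x y) (e x y y).
have DS := D_mul Ixxy Ixyy.
have GS : mul3 (D (e x x x)) (mul3 (e x x y) (e x y y)) (x, x, y) = 0.
  rewrite {1}/mul3 ffunE /=; case: ifP => // _.
  apply: big1 => y1 _; apply: big1 => y2 _.
  case: ifP => // /and4P[h1 h2 _ _]; by rewrite (anti2 h2 h1) GA mul0r.
have SG : mul3 (mul3 (e x x y) (e x y y)) (D (e y y y)) (x, y, y) = 0.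
  rewrite {1}/mul3 ffunE /=; case: ifP => // _.
  apply: big1 => y1 _; apply: big1 => y2 _.
  case: ifP => // /and4P[_ _ h3 h4]; by rewrite (anti2 h4 h3) GB mulr0.
have E1 := Dpt (x, x, y) Ixxx IS.
rewrite S1 // GS add0r mulE_l DS /le3 !lexx hxy !eqxx /= addE mulE_r mulE_l in E1.
rewrite /le3 !lexx hxy !eqxx /= in E1.
have E2 := Dpt (x, y, y) IS Iyyy.
rewrite S2 // SG addr0 mulE_r DS /le3 !lexx hxy !eqxx /= addE mulE_r mulE_l in E2.
rewrite /le3 !lexx hxy !eqxx /= in E2.
have K0 : D (e x y y) (x, y, y) = 0.
  by apply: (@addrI _ (D (e x x y) (x, x, y))); rewrite addr0 -E1.
split => //.
move: E2; rewrite K0 addr0 => E2.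
by [].
Qed.


Lemma L1 (x y : P) : (x <= y)%O -> mul3 (e x x x) (e x x y) = e x x y.
Proof.
move=> hxy; apply/ffunP => -[[p1 p2] p3]; rewrite mulE_l.
case: (boolP ((p1, p2, p3) == (x, x, y))) => [/eqP [-> -> ->]|ne].
  by rewrite /le3 !lexx hxy !eqxx !ffunE eqxx.
rewrite [RHS]ffunE (negbTE ne).
case: ifP => //; case/andP => _ /and5P[/eqP e1 _ h1 h2 h3].
have e2 := anti2 h1 h2; subst; rewrite ffunE.
case: eqP => // -[e3]; subst; by rewrite eqxx in ne.
Qed.

Lemma L2 (x y : P) : (x <= y)%O -> mul3 (e x y y) (e y y y) = e x y y.
Proof.
move=> hxy; apply/ffunP => -[[p1 p2] p3]; rewrite mulE_r.
case: (boolP ((p1, p2, p3) == (x, y, y))) => [/eqP [-> -> ->]|ne].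
  by rewrite /le3 !lexx hxy !eqxx !ffunE eqxx.
rewrite [RHS]ffunE (negbTE ne).
case: ifP => //; case/andP => _ /and5P[/eqP e1 _ h1 h2 h3].
have e2 := anti2 h1 h2; subst; rewrite ffunE.
case: eqP => // -[e3]; subst; by rewrite eqxx in ne.
Qed.

Lemma mainF (x y : P) : (x < y)%O -> D (e x x y) = 0.
Proof.
move=> lt; have hxy := ltW lt.
have Ixxx := Ie (lexx x) (lexx x).
have Ixxy := Ie (lexx x) hxy.
apply/ffunP => -[[p1 p2] p3]; rewrite zeroE.
case le: (le3 p1 p2 p3); last by apply: (D_I3 Ixxy); rewrite le.
move: (le); rewrite /le3 => /andP[h12 h23].
have h13 := le_trans h12 h23.
case: (p2 =P x) => [E2|n2]; last first.
  rewrite -{1}(L1 hxy) Dpt // mulE_r mulE_l !ifc ?addr0 // => H; destr;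
  by apply: n2; apply: anti2.
subst p2.
case: (p1 =P x) => [E1|n1]; last first.
  have Ig := Ie (lexx p1) h12.
  have Z : mul3 (e p1 p1 x) (e x x y) = 0.
    by apply: mul_e0; rewrite xpair_eqE eqxx andbT; apply/eqP.
  have := Dpt0 (p1, p1, p3) Ig Ixxy Z.
  rewrite mulE_r mulE_l /le3 !lexx h12 h13 h23 !eqxx /= ifc ?add0r //.
  by move=> H; destr; apply: n1; apply: anti2.
subst p1.
case: (p3 =P y) => [->|n3]; first by case: (key hxy).
have Ig := Ie h23 (lexx p3).
have Z : mul3 (e x x y) (e x p3 p3) = 0.
  by apply: mul_e0; rewrite xpair_eqE eqxx /=; apply/eqP => E; apply: n3; rewrite E.
have := Dpt0 (x, p3, p3) Ixxy Ig Z.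
rewrite mulE_r mulE_l /le3 !lexx h23 !eqxx /= ifc ?addr0 //.
by move=> H; destr; apply: n3; apply: anti2.
Qed.

Lemma mainK (x y : P) : (x < y)%O -> D (e x y y) = 0.
Proof.
move=> lt; have hxy := ltW lt.
have Iyyy := Ie (lexx y) (lexx y).
have Ixyy := Ie hxy (lexx y).
apply/ffunP => -[[p1 p2] p3]; rewrite zeroE.
case le: (le3 p1 p2 p3); last by apply: (D_I3 Ixyy); rewrite le.
move: (le); rewrite /le3 => /andP[h12 h23].
have h13 := le_trans h12 h23.
case: (p2 =P y) => [E2|n2]; last first.
  rewrite -{1}(L2 hxy) Dpt // mulE_r mulE_l !ifc ?addr0 // => H; destr;
  by apply: n2; apply: anti2.
subst p2.
case: (p3 =P y) => [E3|n3]; last first.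
  have Ig := Ie h23 (lexx p3).
  have Z : mul3 (e x y y) (e y p3 p3) = 0.
    by apply: mul_e0; rewrite xpair_eqE eqxx /=; apply/eqP => E; apply: n3; rewrite E.
  have := Dpt0 (p1, p3, p3) Ixyy Ig Z.
  rewrite mulE_r mulE_l /le3 !lexx h12 h13 h23 !eqxx /= ifc ?addr0 //.
  by move=> H; destr; apply: n3; apply: anti2.
subst p3.
case: (p1 =P x) => [->|n1]; first by case: (key hxy).
have Ig := Ie (lexx p1) h12.
have Z : mul3 (e p1 p1 y) (e x y y) = 0.
  by apply: mul_e0; rewrite xpair_eqE eqxx andbT; apply/eqP.
have := Dpt0 (p1, p1, y) Ig Ixyy Z.
rewrite mulE_r mulE_l /le3 !lexx h12 !eqxx /= ifc ?add0r //.
by move=> H; destr; apply: n1; apply: anti2.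
Qed.

End Pf.

Unset Implicit Arguments.
Set Strict Implicit.

Theorem lemma4p5 (d : Order.disp_t) (P : finPOrderType d) (R : comPzRingType)
    (D : fun3 P R -> fun3 P R) :
  derivation3 D ->
  forall x y : P, (x < y)%O ->
    D (e3 R x x y) = 0 /\ D (e3 R x y y) = 0.
Proof. by move=> HD x y lt; split; [apply: mainF | apply: mainK]. Qed.
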